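(* Let $(\Omega,\mathcal F)$ be a measurable space, $w$ a capacity, $X$ a bounded measurable function, and $\alpha\in(0,1)$. Then $$\big[\mathrm{VaR}^w_\alpha(X),\overline{\mathrm{VaR}}^w_\alpha(X)\big]=\operatorname*{argmin}_{x\in\mathbb R}\Big\{x+\frac1\alpha\int(X-x)_+\,\mathrm dw\Big\},\qquad \mathrm{ES}^w_\alpha(X)=\min_{x\in\mathbb R}\Big\{x+\frac1\alpha\int(X-x)_+\,\mathrm dw\Big\}.$$
   Context: A capacity is an increasing function $w:\mathcal F\to\mathbb R$ with $w(\varnothing)=0$, $w(\Omega)=1$. For a bounded measurable $Y$, $\int Y\,\mathrm dw=\int_{-\infty}^0(w(Y\ge y)-1)\,\mathrm dy+\int_0^\infty w(Y\ge y)\,\mathrm dy$ (Choquet integral). $\mathrm{VaR}^w_t(X)=\inf\{x\in\mathbb R:w(X\ge x)\le t\}$ and $\overline{\mathrm{VaR}}^w_t(X)=\inf\{x\in\mathbb R:w(X\ge x)<t\}$; $\mathrm{ES}^w_\alpha(X)=\frac1\alpha\int_0^\alpha\mathrm{VaR}^w_t(X)\,\mathrm dt$. $(y)_+=\max(y,0)$. *)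

(* Defs.v *)
From HB Require Import structures.
From mathcomp Require Import all_boot all_order all_algebra.
From mathcomp Require Import all_classical all_reals all_analysis.
Set Implicit Arguments. Unset Strict Implicit. Unset Printing Implicit Defensive.
Import Order.TTheory GRing.Theory Num.Theory.
Import numFieldNormedType.Exports.
Local Open Scope classical_set_scope.
Local Open Scope ring_scope.

Section Capacity.
Context {d : measure_display} {T : measurableType d} {R : realType}.

(* A capacity: increasing on measurable sets, w(empty)=0, w(Omega)=1.
   (w is given on all of set T, but only its values on measurable sets matter.) *)
Definition is_capacity (w : set T -> R) : Prop :=
  [/\ w set0 = 0, w setT = 1 &
      forall A B, measurable A -> measurable B -> A `<=` B -> w A <= w B].

Definition choquet (w : set T -> R) (Y : T -> R) : R :=
  (\int[lebesgue_measure]_(y in `]-oo, 0[) (w [set om | y <= Y om] - 1))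
  + (\int[lebesgue_measure]_(y in `[0, +oo[) (w [set om | y <= Y om])).

Definition VaR (w : set T -> R) (t : R) (X : T -> R) : R :=
  inf [set x : R | w [set om | x <= X om] <= t].

Definition VaRbar (w : set T -> R) (t : R) (X : T -> R) : R :=
  inf [set x : R | w [set om | x <= X om] < t].

Definition ES (w : set T -> R) (a : R) (X : T -> R) : R :=
  a^-1 * (\int[lebesgue_measure]_(t in `[0, a]) VaR w t X).

Definition ES_objective (w : set T -> R) (a : R) (X : T -> R) (x : R) : R :=
  x + a^-1 * choquet w (fun om => Num.max (X om - x) 0).

End Capacity.

(* Main.v *)
Require Import Defs.
From HB Require Import structures.
From mathcomp Require Import all_boot all_order all_algebra.
From mathcomp Require Import all_classical all_reals all_analysis.
From mathcomp Require Import measurable_realfun ring lra.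
Set Implicit Arguments. Unset Strict Implicit. Unset Printing Implicit Defensive.
Import Order.TTheory GRing.Theory Num.Theory.
Import numFieldNormedType.Exports.
Local Open Scope classical_set_scope.
Local Open Scope ring_scope.

Section shift.
Context {R : realType}.
Notation mu := (@lebesgue_measure R).

Definition shiftR (c : R) : R -> measurableTypeR R := fun s => s + c.

Lemma measurable_shiftR c : measurable_fun setT (shiftR c).
Proof. by apply: measurable_funD => //; exact: measurable_cst. Qed.

Lemma lebesgue_shift c A : measurable A ->
  pushforward mu (shiftR c) A = mu A.
Proof.
move=> mA; apply/esym/lebesgue_measure_unique => //=.
  exact: measurable_shiftR.
move=> _ _ [[a b]] _ <-.
rewrite /pushforward.
have -> : shiftR c @^-1` `]a, b] = `]a - c, b - c]%classic.
  apply/seteqP; split => s; rewrite /= /shiftR !in_itv /=.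
    by move=> /andP[h1 h2]; rewrite ltrBlDr lerBrDr h1 h2.
  by move=> /andP[h1 h2]; rewrite -ltrBlDr -lerBrDr h1 h2.
rewrite !lebesgue_measure_itv /= !lte_fin ltrD2r.
by case: ifP => // _; rewrite -!EFinD; congr EFin; ring.
Qed.

End shift.
Section itvlemmas.
Context {R : realType}.
Notation mu := (@lebesgue_measure R).

Lemma leb_oo (x y : R) : x <= y -> fine (mu `]x, y[) = y - x.
Proof.
move=> xy; rewrite lebesgue_measure_itv /= lte_fin.
case: ltP => [xy0|yx] //=.
have -> : x = y by apply/eqP; rewrite eq_le xy yx.
by rewrite subrr.
Qed.

Lemma int_cst_oo (x y c : R) : mu.-integrable `]x, y[ (EFin \o cst c).
Proof.
apply: measurable_bounded_integrable => //.
    by rewrite /= lebesgue_measure_itv; case: ifP => // _; rewrite ltry.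
exact: bounded_cst.
Qed.

Lemma Rint_oo_le (f : R -> R) x y c : x <= y ->
  mu.-integrable `]x, y[ (EFin \o f) ->
  (forall s, x < s < y -> f s <= c) ->
  \int[mu]_(u in `]x, y[) f u <= c * (y - x).
Proof.
move=> xy fi fc.
apply: (@le_trans _ _ (\int[mu]_(u in `]x, y[) c)).
  apply: le_Rintegral => //; first exact: int_cst_oo.
by rewrite Rintegral_cst // leb_oo.
Qed.

Lemma Rint_oo_ge (f : R -> R) x y c : x <= y ->
  mu.-integrable `]x, y[ (EFin \o f) ->
  (forall s, x < s < y -> c <= f s) ->
  c * (y - x) <= \int[mu]_(u in `]x, y[) f u.
Proof.
move=> xy fi fc.
apply: (@le_trans _ _ (\int[mu]_(u in `]x, y[) c)).
  by rewrite Rintegral_cst // leb_oo.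
by apply: le_Rintegral => //; exact: int_cst_oo.
Qed.

End itvlemmas.
Section squeeze.
Context {R : realType}.




Lemma squeeze (D v : R -> R) (al : R) : 0 < al ->
  (forall a b, 0 <= a -> a <= b -> b <= al ->
     `|D b - D a| <= (v a - v b) * (b - a)) ->
  D al = D 0.
Proof.
move=> al0 H.
have key : forall n : nat, (0 < n)%N ->
    `|D al - D 0| <= (v 0 - v al) * (al / n%:R).
  move=> n n0; set h := al / n%:R.
  have n0' : (0 : R) < n%:R by rewrite ltr0n.
  have h0 : 0 < h by rewrite /h divr_gt0.
  have nh : n%:R * h = al by rewrite /h mulrC divfK // gt_eqF.
  suff: forall k, (k <= n)%N ->
      `|D (k%:R * h) - D 0| <= (v 0 - v (k%:R * h)) * h.
    by move/(_ n (leqnn n)); rewrite nh.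
  elim=> [|k IH] kn.
    by rewrite mul0r subrr normr0 subrr mul0r.
  have kh0 : 0 <= k%:R * h by rewrite mulr_ge0 // ltW.
  have kh1 : k.+1%:R * h = k%:R * h + h by rewrite -addn1 natrD mulrDl mul1r.
  have k1le : k.+1%:R * h <= al.
    by rewrite -nh ler_pM2r // ler_nat.
  have kk : k%:R * h <= k.+1%:R * h by rewrite kh1 lerDl ltW.
  have := H (k%:R * h) (k.+1%:R * h) kh0 kk k1le.
  have := IH (ltnW kn).
  have := ler_distD (D (k%:R * h)) (D (k.+1%:R * h)) (D 0).
  rewrite kh1 => h1 h2.
  have -> : k%:R * h + h - k%:R * h = h by ring.
  move=> h3.
  have -> : (v 0 - v (k%:R * h + h)) * h
      = (v (k%:R * h) - v (k%:R * h + h)) * h + (v 0 - v (k%:R * h)) * h by ring.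
  lra.
have B0 := H 0 al (lexx 0) (ltW al0) (lexx al).
set B := (v 0 - v al) * al.
apply/eqP; rewrite -subr_eq0 -normr_eq0; apply/eqP.
apply/eqP; rewrite eq_le normr_ge0 andbT; apply/negP => /negP.
rewrite -ltNge => e0.
set e := `|D al - D 0| in e0 key.
set n := (Num.truncn (B / e)).+1.
have := key n isT.
have n0 : (0 : R) < n%:R by rewrite ltr0n.
rewrite mulrA -/B => hn.
have : e * n%:R <= B by rewrite -ler_pdivlMr.
rewrite -ler_pdivlMl // => /(lt_le_trans (truncnS_gt (B / e))).
by rewrite mulrC ltxx.
Qed.

End squeeze.
Section Gsec.
Context {R : realType}.
Notation mu := (@lebesgue_measure R).
Variables (G : R -> R) (M : R).
Hypothesis M_ge0 : 0 <= M.
Hypothesis G_ni : forall s t, s <= t -> G t <= G s.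
Hypothesis G_ge0 : forall s, 0 <= G s.
Hypothesis G_le1 : forall s, G s <= 1.
Hypothesis G_low : forall s, s <= - M -> G s = 1.
Hypothesis G_high : forall s, M < s -> G s = 0.

Lemma mG : measurable_fun setT G.
Proof. by apply: nonincreasing_measurable => // s t st; exact: G_ni. Qed.

Lemma intG x : mu.-integrable `]x, +oo[ (EFin \o G).
Proof.
pose y := Num.max x M.
apply: (@le_integrable _ _ _ mu _ _ _ (EFin \o \1_`]x, y]%classic)).
- exact: measurable_itv.
- by apply/measurable_EFinP; exact: measurable_funTS mG.
- move=> u xu; have {xu} : u \in `]x, +oo[ := xu; rewrite in_itv /= andbT => xu.
  rewrite /= lee_fin (ger0_norm (G_ge0 _)) indicE.
  have [uy|uy] := leP u y.
    rewrite mem_set ?normr1 ?G_le1 //.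
    by change (u \in `]x, y]); rewrite in_itv /= xu uy.
  rewrite memNset ?G_high ?normr0 //; last first.
    by change (~ (u \in `]x, y])); rewrite in_itv /= xu /= leNgt uy.
  by apply: le_lt_trans uy; rewrite /y le_max lexx orbT.
- apply: integrableS (integrable_indic_itv _ _ _ _) => //.
Qed.

Definition K x := \int[mu]_(u in `]x, +oo[) G u.

Lemma intG_oo x y : mu.-integrable `]x, y[ (EFin \o G).
Proof.
apply: integrableS (intG x) => //.
by move=> u; rewrite /= !in_itv /= andbT => /andP[].
Qed.

Lemma Kdiff x y : x <= y -> K x - K y = \int[mu]_(u in `]x, y[) G u.
Proof.
move=> xy.
have := @Rintegral_itvB R G (BRight x) (BInfty _ false) y (intG x).
rewrite !bnd_simp => /(_ xy isT) H.
rewrite /K -H opprB addrC subrK.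
by rewrite Rintegral_itv_bndo_bndc // intG_oo.
Qed.

Lemma Kle x y c : x <= y -> (forall s, x < s < y -> G s <= c) ->
  K x - K y <= c * (y - x).
Proof. by move=> xy Hc; rewrite Kdiff //; apply: Rint_oo_le => //; exact: intG_oo. Qed.

Lemma Kge x y c : x <= y -> (forall s, x < s < y -> c <= G s) ->
  c * (y - x) <= K x - K y.
Proof. by move=> xy Hc; rewrite Kdiff //; apply: Rint_oo_ge => //; exact: intG_oo. Qed.


Definition v a := inf [set x | G x <= a].
Definition vb a := inf [set x | G x < a].

Section fixa.
Variable a : R.
Hypothesis a_ge0 : 0 <= a.
Hypothesis a_lt1 : a < 1.

Let Sne : nonempty [set x | G x <= a].
Proof. by exists (M + 1); rewrite /= G_high ?ltrDl. Qed.

Let Slb : lbound [set x | G x <= a] (- M).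
Proof.
move=> x /= Gx; rewrite leNgt; apply/negP => xM.
by move: Gx; rewrite (G_low (ltW xM)) => Gx; have := lt_le_trans a_lt1 Gx; rewrite ltxx.
Qed.

Let Shl : has_lbound [set x | G x <= a].
Proof. by exists (- M). Qed.

Lemma V1 s : v a < s -> G s <= a.
Proof.
move=> vs; have [e Se] := @inf_adherent _ _ (s - v a) (ltac:(by rewrite subr_gt0)) (conj Sne Shl).
rewrite addrC subrK => es.
exact: le_trans (G_ni (ltW es)) Se.
Qed.

Lemma V2 s : s < v a -> a < G s.
Proof.
move=> sv; rewrite ltNge; apply/negP => Gs.
have := ge_inf Shl Gs; rewrite -/(v a) => H; by have := lt_le_trans sv H; rewrite ltxx.
Qed.

Lemma v_lb : - M <= v a.
Proof. exact: lb_le_inf. Qed.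

Lemma v_ub : v a <= M.
Proof.
rewrite leNgt; apply/negP => Mv.
have := V2 (s := (M + v a) / 2) ltac:(lra).
rewrite G_high; last lra.
by rewrite ltNge a_ge0.
Qed.

End fixa.

Section fixb.
Variable a : R.
Hypothesis a_gt0 : 0 < a.
Hypothesis a_le1 : a <= 1.

Let Sne : nonempty [set x | G x < a].
Proof. by exists (M + 1); rewrite /= G_high ?ltrDl. Qed.

Let Slb : lbound [set x | G x < a] (- M).
Proof.
move=> x /= Gx; rewrite leNgt; apply/negP => xM.
by move: Gx; rewrite (G_low (ltW xM)) => Gx; have := lt_le_trans Gx a_le1; rewrite ltxx.
Qed.

Let Shl : has_lbound [set x | G x < a].
Proof. by exists (- M). Qed.

Lemma W1 s : vb a < s -> G s < a.
Proof.
move=> vs; have [e Se] := @inf_adherent _ _ (s - vb a) (ltac:(by rewrite subr_gt0)) (conj Sne Shl).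
rewrite addrC subrK => es.
exact: le_lt_trans (G_ni (ltW es)) Se.
Qed.

Lemma W2 s : s < vb a -> a <= G s.
Proof.
move=> sv; rewrite leNgt; apply/negP => Gs.
have := ge_inf Shl Gs; rewrite -/(vb a) => H; by have := lt_le_trans sv H; rewrite ltxx.
Qed.

End fixb.



Lemma Kmin a x : (forall s, x < s -> G s <= a) -> (forall s, s < x -> a <= G s) ->
  forall y, a * x + K x <= a * y + K y.
Proof.
move=> H1 H2 y; have [xy|yx] := leP x y.
  have := @Kle x y a xy (fun s sxy => H1 s (proj1 (andP sxy))).
  rewrite mulrBr => h; lra.
have := @Kge y x a (ltW yx) (fun s sxy => H2 s (proj2 (andP sxy))).
rewrite mulrBr => h; lra.
Qed.

Lemma Kmin_v a : 0 <= a -> a < 1 -> forall y, a * v a + K (v a) <= a * y + K y.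
Proof.
move=> a0 a1; apply: Kmin => s vs; first exact: V1.
exact/ltW/V2.
Qed.

Lemma Kstrict_left a x : 0 <= a -> a < 1 -> x < v a ->
  exists y, a * y + K y < a * x + K x.
Proof.
move=> a0 a1 xv; pose y := (x + v a) / 2.
have xy : x < y by rewrite /y; lra.
have yv : y < v a by rewrite /y; lra.
have Gy : a < G y by exact: V2.
have := @Kge x y (G y) (ltW xy) (fun s sxy => G_ni (ltW (proj2 (andP sxy)))).
have : a * (y - x) < G y * (y - x) by rewrite ltr_pM2r // subr_gt0.
rewrite !mulrBr => h1 h2; exists y; lra.
Qed.

Lemma Kstrict_right a x : 0 < a -> a <= 1 -> vb a < x ->
  exists y, a * y + K y < a * x + K x.
Proof.
move=> a0 a1 xv; pose y := (vb a + x) / 2.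
have xy : y < x by rewrite /y; lra.
have yv : vb a < y by rewrite /y; lra.
have Gy : G y < a by exact: W1.
have := @Kle y x (G y) (ltW xy) (fun s sxy => G_ni (ltW (proj1 (andP sxy)))).
have : G y * (x - y) < a * (x - y) by rewrite ltr_pM2r // subr_gt0.
rewrite !mulrBr => h1 h2; exists y; lra.
Qed.

Lemma v_ni a b : 0 <= a -> a <= b -> b < 1 -> v b <= v a.
Proof.
move=> a0 ab b1; rewrite leNgt; apply/negP => vab.
have := @V1 a a0 (le_lt_trans ab b1) ((v a + v b) / 2) ltac:(lra).
have := @V2 b b1 ((v a + v b) / 2) ltac:(lra).
move=> h1 h2; lra.
Qed.

Lemma v_le_vb a : 0 < a -> a < 1 -> v a <= vb a.
Proof.
move=> a0 a1; rewrite leNgt; apply/negP => vab.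
have := @W1 a a0 (ltW a1) ((v a + vb a) / 2) ltac:(lra).
have := @V2 a a1 ((v a + vb a) / 2) ltac:(lra).
move=> h1 h2; lra.
Qed.

Lemma KM : K M = 0.
Proof.
rewrite /K (@eq_Rintegral _ _ _ _ _ (fun=> 0)); last first.
  by move=> u; rewrite inE /= in_itv /= andbT => Mu; rewrite G_high.
by rewrite Rintegral_cst // mul0r.
Qed.

Lemma K_v0 : K (v 0) = 0.
Proof.
have vM : v 0 <= M by apply: v_ub.
have h1 := @Kle (v 0) M 0 vM (fun s sxy => @V1 0 (lexx 0) ltr01 s (proj1 (andP sxy))).
have h2 := @Kge (v 0) M 0 vM (fun s _ => G_ge0 s).
move: h1 h2; rewrite KM mul0r subr0 => h1 h2; lra.
Qed.

Section ESsec.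
Variable al : R.
Hypothesis al0 : 0 < al.
Hypothesis al1 : al < 1.

Let cl t := Num.min (Num.max t 0) al.

Let cl_ge0 t : 0 <= cl t.
Proof. by rewrite /cl le_min le_max lexx orbT ltW. Qed.

Let cl_le t : cl t <= al.
Proof. by rewrite /cl ge_min lexx orbT. Qed.

Let cl_id t : 0 <= t -> t <= al -> cl t = t.
Proof.
move=> t0 ta; rewrite /cl.
have -> : Num.max t 0 = t by apply/max_idPl.
by apply/min_idPl.
Qed.

Let vc t := v (cl t).

Let vc_ni s t : s <= t -> vc t <= vc s.
Proof.
move=> st; apply: v_ni => //; last exact: le_lt_trans (cl_le _) al1.
by rewrite /cl le_min2 // le_max2.
Qed.

Lemma mv : measurable_fun `[0, al] v.
Proof.
have mvc : measurable_fun setT vc.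
  by apply: nonincreasing_measurable => // s t st; exact: vc_ni.
apply: eq_measurable_fun (measurable_funTS mvc) => t.
by rewrite inE /= in_itv /= => /andP[t0 ta]; rewrite /vc cl_id.
Qed.

Lemma intv : mu.-integrable `[0, al] (EFin \o v).
Proof.
have mA : measurable `[0, al]%classic := measurable_itv _.
apply: (@measurable_bounded_integrable _ _ _ mu v _ mA).
  by rewrite /= lebesgue_measure_itv; case: ifP => // _; rewrite ltry.
  exact: mv.
have HM : forall t, `[0, al]%classic t -> `|v t| <= M.
  move=> t At; have : t \in `[0, al] := At.
  rewrite in_itv /= => /andP[t0 ta].
  have h1 := @v_lb t t0 (le_lt_trans ta al1).
  have h2 := @v_ub t t0 (le_lt_trans ta al1).
  by rewrite ler_norml h1 h2.
rewrite /bounded_near; near=> B => t At /=.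
apply: (@le_trans _ _ M); first exact: HM.
by near: B; apply: nbhs_pinfty_ge; exact: num_real.
Unshelve. all: end_near.
Qed.

Definition Psi a := \int[mu]_(t in `[0, a]) v t.
Definition phi a := a * v a + K (v a).

Lemma Psi_diff a b : 0 <= a -> a <= b -> b <= al ->
  Psi b - Psi a = \int[mu]_(t in `]a, b[) v t.
Proof.
move=> a0 ab bal.
have ib : mu.-integrable `[0, b] (EFin \o v).
  apply: integrableS intv => //.
  by apply: subset_itvl; rewrite bnd_simp.
have := @Rintegral_itvB R v (BLeft 0) (BRight b) a ib.
rewrite !bnd_simp => /(_ a0 ab) ->.
rewrite Rintegral_itv_bndo_bndc //.
apply: integrableS intv => //.
move=> t; rewrite /= !in_itv /= => /andP[ta tb].
by rewrite (le_trans a0 (ltW ta)) (le_trans (ltW tb) bal).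
Qed.

Lemma Psi_le a b : 0 <= a -> a <= b -> b <= al ->
  Psi b - Psi a <= v a * (b - a).
Proof.
move=> a0 ab bal; rewrite Psi_diff //; apply: Rint_oo_le => //.
  apply: integrableS intv => //.
  move=> t; rewrite /= !in_itv /= => /andP[ta tb].
  by rewrite (le_trans a0 (ltW ta)) (le_trans (ltW tb) bal).
move=> s /andP[sa sb]; apply: v_ni => //; first exact: ltW.
exact: lt_trans sb (le_lt_trans bal al1).
Qed.

Lemma Psi_ge a b : 0 <= a -> a <= b -> b <= al ->
  v b * (b - a) <= Psi b - Psi a.
Proof.
move=> a0 ab bal; rewrite Psi_diff //; apply: Rint_oo_ge => //.
  apply: integrableS intv => //.
  move=> t; rewrite /= !in_itv /= => /andP[ta tb].
  by rewrite (le_trans a0 (ltW ta)) (le_trans (ltW tb) bal).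
move=> s /andP[sa sb]; apply: v_ni => //.
- exact: le_trans a0 (ltW sa).
- exact: ltW.
- exact: le_lt_trans bal al1.
Qed.

Lemma phi_le a b : 0 <= a -> a <= b -> b <= al ->
  phi b - phi a <= v a * (b - a).
Proof.
move=> a0 ab bal.
have := @Kmin_v b (le_trans a0 ab) (le_lt_trans bal al1) (v a).
rewrite /phi mulrBr => h; lra.
Qed.

Lemma phi_ge a b : 0 <= a -> a <= b -> b <= al ->
  v b * (b - a) <= phi b - phi a.
Proof.
move=> a0 ab bal.
have := @Kmin_v a a0 (le_lt_trans (le_trans ab bal) al1) (v b).
rewrite /phi mulrBr => h; lra.
Qed.

Lemma Psi_phi : Psi al = phi al.
Proof.
have := @squeeze R (fun a => phi a - Psi a) v al al0.
have D0 : phi 0 - Psi 0 = 0.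
  by rewrite /phi /Psi mul0r add0r K_v0 set_itv1 Rintegral_set1 subrr.
rewrite D0 => H.
suff : phi al - Psi al = 0 by move/eqP; rewrite subr_eq0 => /eqP.
apply: H => a b a0 ab bal.
have h1 := Psi_le a0 ab bal.
have h2 := Psi_ge a0 ab bal.
have h3 := phi_le a0 ab bal.
have h4 := phi_ge a0 ab bal.
rewrite ler_norml mulrBl; apply/andP; split; lra.
Qed.

End ESsec.

End Gsec.
Section shiftint.
Context {R : realType}.
Notation mu := (@lebesgue_measure R).

Lemma integral_shift (f : R -> R) c (D : set R) : measurable D ->
  measurable_fun D f -> (forall u, D u -> 0 <= f u) ->
  (\int[mu]_(s in shiftR c @^-1` D) (f (s + c))%:E = \int[mu]_(u in D) (f u)%:E)%E.
Proof.
move=> mD mf f0.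
transitivity (\int[mu]_(s in shiftR c @^-1` D) ((EFin \o f) \o shiftR c) s)%E => //.
rewrite -(@ge0_integral_pushforward _ _ (measurableTypeR R) (measurableTypeR R) R (shiftR c) (measurable_shiftR c) mu D (EFin \o f)) //.
- apply: eq_measure_integral; first exact: measurable_shiftR.
  by move=> mphi A mA _; exact: lebesgue_shift.
- exact/measurable_EFinP.
- by move=> u /set_mem /f0; rewrite lee_fin.
Qed.

End shiftint.

Section choq.
Context (d : measure_display) (T : measurableType d) (R : realType).
Notation mu := (@lebesgue_measure R).
Variables (w : set T -> R) (X : T -> R).
Hypothesis wcap : is_capacity w.
Hypothesis mX : measurable_fun setT X.

Let G := fun s => w [set om | s <= X om].

Lemma mlevel s : measurable [set om | s <= X om].
Proof.
have := mX measurableT (measurable_itv `[s, +oo[).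
rewrite setTI; congr measurable; apply/seteqP; split => om /=;
  by rewrite in_itv /= andbT.
Qed.

Lemma G_ni s t : s <= t -> G t <= G s.
Proof.
move=> st; case: wcap => _ _ wm; apply: wm; try exact: mlevel.
by move=> om /= /(le_trans st).
Qed.

Lemma choquet_K x : choquet w (fun om => Num.max (X om - x) 0) = K G x.
Proof.
case: wcap => w0 w1 wm.
rewrite /choquet.
rewrite (@eq_Rintegral _ _ _ _ _ (fun=> 0)); last first.
  move=> y; rewrite inE /= in_itv /= => y0.
  have -> : [set om | y <= Num.max (X om - x) 0] = setT.
    apply/seteqP; split => // om _ /=.
    by rewrite le_max (ltW y0) orbT.
  by rewrite w1 subrr.
rewrite Rintegral_cst // mul0r add0r /K /Rintegral; congr fine.
have hE y : 0 < y -> [set om | y <= Num.max (X om - x) 0] = [set om | y + x <= X om].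
  move=> y0; apply/seteqP; split => om /=.
    by rewrite le_max (leNgt y 0) y0 orbF lerBrDr.
  by rewrite le_max lerBrDr => ->.
have mG' : measurable_fun setT (fun y : R => G (y + x)).
  apply: nonincreasing_measurable => // s t st; apply: G_ni.
  by rewrite lerD2r.
rewrite -integral_itv_obnd_cbnd; last first.
  apply/measurable_EFinP.
  apply: eq_measurable_fun (measurable_funTS mG') => y.
  by rewrite inE /= in_itv /= andbT => y0; rewrite /G hE.
transitivity (\int[mu]_(y in `]0%R, +oo[) (G (y + x)%R)%:E)%E.
  by apply: eq_integral => y; rewrite inE /= in_itv /= andbT => y0; rewrite hE.
have -> : `]0, +oo[%classic = shiftR x @^-1` `]x, +oo[.
  apply/seteqP; split => y; rewrite /= /shiftR !in_itv /= !andbT.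
    by rewrite ltrDr.
  by rewrite ltrDr.
have mG : measurable_fun setT G.
  by apply: nonincreasing_measurable => // s t st; exact: G_ni.
apply: integral_shift => //.
- exact: measurable_funTS mG.
- move=> u _; case: wcap => w0' _ wm'; rewrite -w0'; apply: wm' => //.
  exact: mlevel.
Qed.

End choq.
Unset Implicit Arguments.

Theorem theorem3 (d : measure_display) (T : measurableType d) (R : realType)
  (w : set T -> R) (X : T -> R) (alpha : R) :
  is_capacity w ->
  measurable_fun setT X ->
  (exists M : R, forall om, `|X om| <= M) ->
  0 < alpha < 1 ->
  [set x : R | forall y : R, ES_objective w alpha X x <= ES_objective w alpha X y]
    = `[VaR w alpha X, VaRbar w alpha X]%classic /\
  ((exists x : R, ES_objective w alpha X x = ES w alpha X) /\
   (forall y : R, ES w alpha X <= ES_objective w alpha X y)).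
Proof.
move=> wcap mX [M0 hM] /andP[al0 al1].
pose G := fun s => w [set om | s <= X om].
pose M := `|M0|.
have hX om : - M <= X om <= M.
  by rewrite -ler_norml; exact: le_trans (hM om) (ler_norm M0).
have Gni : forall s t, s <= t -> G t <= G s := fun s t st => G_ni wcap mX st.
have [w0 w1 wm] := wcap.
have Gge0 s : 0 <= G s by rewrite -w0; apply: wm => //; exact: mlevel.
have Gle1 s : G s <= 1 by rewrite -w1; apply: wm => //; exact: mlevel.
have Glow s : s <= - M -> G s = 1.
  move=> sM; rewrite /G.
  have -> : [set om | s <= X om] = setT.
    apply/seteqP; split=> // om _ /=.
    by apply: le_trans sM _; case/andP: (hX om).
  exact: w1.
have Ghigh s : M < s -> G s = 0.
  move=> Ms; rewrite /G.
  have -> : [set om | s <= X om] = set0.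
    apply/seteqP; split=> // om /= sX.
    case/andP: (hX om) => _ XM.
    by have := lt_le_trans Ms (le_trans sX XM); rewrite ltxx.
  exact: w0.
have obj x : ES_objective w alpha X x = x + alpha^-1 * K G x.
  by rewrite /ES_objective (choquet_K wcap mX).
have objle x y : (ES_objective w alpha X x <= ES_objective w alpha X y) =
    (alpha * x + K G x <= alpha * y + K G y).
  rewrite !obj -(ler_pM2l al0) !mulrDr !mulrA mulfV ?gt_eqF // !mul1r.
  by [].
have ESe : ES w alpha X = ES_objective w alpha X (v G alpha).
  rewrite obj; change (alpha^-1 * Psi G alpha = v G alpha + alpha^-1 * K G (v G alpha)).
  rewrite (Psi_phi Gni Gge0 Gle1 Glow Ghigh al0 al1) /phi mulrDr mulrA mulVf ?gt_eqF //.
  by rewrite mul1r.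
split.
  apply/seteqP; split => x /=.
    move=> Hx; rewrite in_itv /=; apply/andP; split.
      rewrite leNgt; apply/negP => xv.
      have [y Hy] := Kstrict_left Gni Gge0 Gle1 Glow Ghigh (ltW al0) al1 xv.
      have := Hx y; rewrite objle => Hxy.
      by have := lt_le_trans Hy Hxy; rewrite ltxx.
    rewrite leNgt; apply/negP => xv.
    have [y Hy] := Kstrict_right Gni Gge0 Gle1 Glow Ghigh al0 (ltW al1) xv.
    have := Hx y; rewrite objle => Hxy.
    by have := lt_le_trans Hy Hxy; rewrite ltxx.
  rewrite in_itv /= => /andP[vx xvb] y.
  rewrite objle; apply: (Kmin Gni Gge0 Gle1 Ghigh) => s hs.
    apply: (V1 Gni Glow Ghigh (ltW al0) al1).
    exact: le_lt_trans vx hs.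
  apply: (W2 Glow (ltW al1)).
  exact: lt_le_trans hs xvb.
split; first by exists (v G alpha); rewrite ESe.
move=> y; rewrite ESe objle.
exact: (Kmin_v Gni Gge0 Gle1 Glow Ghigh (ltW al0) al1).
Qed.
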